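(* Let $\emptyset\neq I\subseteq\mathbb{R}^n$ and let $\mathcal{B}$ be a collection of non-empty subsets of $X$ covering $X$. (i) Let $\mathbb{D}\subseteq I$ be unbounded and suppose $A_I\neq\emptyset$. If a continuous $F:I\times X\to Y$ is $(\mathbb{D},\mathcal{B})$-slowly oscillating, then $F$ is $\mathbb{D}$-quasi-asymptotically $(\mathcal{B},I',1)$-almost periodic, where $I':=\bigcup_{\omega\in A_I}\omega\cdot\mathbb{N}$. (ii) Let $\mathbb{D}_j\subseteq I$ be unbounded for $j=1,\dots,n$. For each $\omega=(\omega_1,\dots,\omega_n)\in B_I$ let $\mathbb{D}_\omega$ be the set of all $\mathbf{t}\in\mathbb{D}_n$ such that $\mathbf{t}+\sum_{i=j+1}^n\omega_ie_i\in\mathbb{D}_j$ for all $j\in\{1,\dots,n-1\}$, and suppose each $\mathbb{D}_\omega$ is unbounded, that $\mathcal{D}:=\bigcap_{\omega\in B_I}\mathbb{D}_\omega$ is unbounded, and that $B_I\cap I\neq\emptyset$. Put $I':=\bigcup_{\omega\in B_I\cap I}\omega\cdot\mathbb{N}$. If $F:I\times X\to Y$ is $(\mathcal{B},(\mathbb{D}_j)_{j=1}^n)$-slowly oscillating, then $F$ is $\mathcal{D}$-quasi-asymptotically $(\mathcal{B},I',1)$-almost periodic.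
   Context: $X,Y$ complex Banach spaces; $e_1,\dots,e_n$ the standard basis of $\mathbb{R}^n$; $\omega\cdot\mathbb{N}=\{k\omega:k\in\mathbb{N}\}$; a tuple $(\omega_1,\dots,\omega_n)$ is identified with $\sum_j\omega_je_j$. $A_I:=\{\omega\in\mathbb{R}^n\setminus\{0\}:\omega+I\subseteq I\}$, $B_I:=\{(\omega_1,\dots,\omega_n)\in(\mathbb{R}\setminus\{0\})^n:\omega_je_j+I\subseteq I\text{ for all }j\}$. A continuous $F:I\times X\to Y$ is $(\mathbb{D},\mathcal{B})$-slowly oscillating if for each $B\in\mathcal{B}$ and $\omega\in A_I$, $\lim_{|\mathbf{t}|\to\infty,\mathbf{t}\in\mathbb{D}}\|F(\mathbf{t}+\omega;x)-F(\mathbf{t};x)\|_Y=0$ uniformly in $x\in B$. It is $(\mathcal{B},(\mathbb{D}_j)_{j=1}^n)$-slowly oscillating if for each $B\in\mathcal{B}$, $(\omega_1,\dots,\omega_n)\in B_I$ and $j$, $\lim_{|\mathbf{t}|\to\infty,\mathbf{t}\in\mathbb{D}_j}\|F(\mathbf{t}+\omega_je_j;x)-F(\mathbf{t};x)\|_Y=0$ uniformly in $x\in B$. For $\mathbb{D}\subseteq I$ unbounded, $I'$ unbounded with $I+I'\subseteq I$, $\mathbb{D}_M:=\{\mathbf{t}\in\mathbb{D}:|\mathbf{t}|\ge M\}$, a continuous $F$ is $\mathbb{D}$-quasi-asymptotically $(\mathcal{B},I',c)$-almost periodic if for every $B\in\mathcal{B}$ and $\epsilon>0$ there is $l>0$ such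 that for each $\mathbf{t}_0\in I'$ there is $\tau\in B(\mathbf{t}_0,l)\cap I'$ and a finite $M(\epsilon,\tau)>0$ with $\|F(\mathbf{t}+\tau;x)-cF(\mathbf{t};x)\|_Y\le\epsilon$ whenever $\mathbf{t},\mathbf{t}+\tau\in\mathbb{D}_{M(\epsilon,\tau)}$, $x\in B$. *)

(* Defs.v *)
From HB Require Import structures.
From mathcomp Require Import all_boot all_order all_algebra.
From mathcomp Require Import complex.
From mathcomp Require Import all_classical all_reals all_analysis.
Set Implicit Arguments. Unset Strict Implicit. Unset Printing Implicit Defensive.
Import Order.TTheory GRing.Theory Num.Theory.
Import numFieldNormedType.Exports.
Local Open Scope classical_set_scope.
Local Open Scope ring_scope.

Section Defs.
Variable R : realType.
Local Notation C := (R[i]).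

Definition enorm n (t : 'rV[R]_n) : R := Num.sqrt (\sum_(i < n) (t ord0 i) ^+ 2).

Definition ebase n (j : 'I_n) : 'rV[R]_n := \row_(i < n) (i == j)%:R.

Definition unbounded n (D : set 'rV[R]_n) : Prop :=
  forall M : R, exists2 t, D t & M < enorm t.

Definition A_set n (I : set 'rV[R]_n) : set 'rV[R]_n :=
  [set w | w != 0 /\ (forall t, I t -> I (w + t))].

Definition B_set n (I : set 'rV[R]_n) : set 'rV[R]_n :=
  [set w | forall j : 'I_n, w ord0 j != 0 /\
       (forall t, I t -> I (w ord0 j *: ebase j + t))].

Definition multN n (w : 'rV[R]_n) : set 'rV[R]_n :=
  [set k%:R *: w | k in [set k : nat | (0 < k)%N]].

Variables (X Y : completeNormedModType C).

Definition cont_on n (I : set 'rV[R]_n) (F : 'rV[R]_n -> X -> Y) : Prop :=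
  {within I `*` [set: X], continuous (fun p : 'rV[R]_n * X => F p.1 p.2)}.

Definition slowly_osc n (I D : set 'rV[R]_n) (Bc : set (set X))
  (F : 'rV[R]_n -> X -> Y) : Prop :=
  cont_on I F /\
  forall B, Bc B -> forall w, A_set I w ->
    forall eps : R, 0 < eps -> exists M : R, forall t, D t -> M <= enorm t ->
      forall x, B x -> `|F (t + w) x - F t x| < (eps%:C)%C.

Definition slowly_osc_j n (I : set 'rV[R]_n) (Dj : 'I_n -> set 'rV[R]_n)
  (Bc : set (set X)) (F : 'rV[R]_n -> X -> Y) : Prop :=
  cont_on I F /\
  forall B, Bc B -> forall w, B_set I w -> forall j : 'I_n,
    forall eps : R, 0 < eps -> exists M : R, forall t, Dj j t -> M <= enorm t ->
      forall x, B x -> `|F (t + w ord0 j *: ebase j) x - F t x| < (eps%:C)%C.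

Definition Dge n (D : set 'rV[R]_n) (M : R) : set 'rV[R]_n :=
  [set t | D t /\ M <= enorm t].

Definition quasi_asym_ap n (I D I' : set 'rV[R]_n) (Bc : set (set X)) (c : C)
  (F : 'rV[R]_n -> X -> Y) : Prop :=
  D `<=` I /\ unbounded D /\ unbounded I' /\
  (forall t tau, I t -> I' tau -> I (t + tau)) /\
  cont_on I F /\
  (forall B, Bc B -> forall eps : R, 0 < eps -> exists2 l : R, 0 < l &
    forall t0, I' t0 -> exists tau, I' tau /\ enorm (tau - t0) < l /\
      exists2 M : R, 0 < M & forall t x, Dge D M t -> Dge D M (t + tau) ->
        B x -> `|F (t + tau) x - c *: F t x| <= (eps%:C)%C).

(* D_omega for part (ii); indices shifted to 0..n (dimension n.+1),
   D_{n} is Dj ord_max, and j ranges over 0..n-1 (i.e. j < n) *)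
Definition D_omega n (Dj : 'I_n.+1 -> set 'rV[R]_n.+1) (w : 'rV[R]_n.+1)
  : set 'rV[R]_n.+1 :=
  [set t | Dj ord_max t /\
     forall j : 'I_n.+1, (j < n)%N ->
       Dj j (t + \sum_(i < n.+1 | (j < i)%N) w ord0 i *: ebase i)].

End Defs.

(* Main.v *)
Require Import Defs.
From HB Require Import structures.
From mathcomp Require Import all_boot all_order all_algebra.
From mathcomp Require Import complex.
From mathcomp Require Import all_classical all_reals all_analysis.
From mathcomp Require Import lra.
Import Order.TTheory GRing.Theory Num.Theory.
Import numFieldNormedType.Exports.
Local Open Scope classical_set_scope.
Local Open Scope ring_scope.

Set Implicit Arguments. Unset Strict Implicit.
Section H.
Variable R : realType.

Definition esq n (t : 'rV[R]_n) : R := \sum_(i < n) (t ord0 i) ^+ 2.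

Lemma esq_ge0 n (t : 'rV[R]_n) : 0 <= esq t.
Proof. by apply: sumr_ge0 => i _; rewrite sqr_ge0. Qed.

Lemma esq_tri n (a c : 'rV[R]_n) : esq a <= 2 * esq (a + c) + 2 * esq c.
Proof.
rewrite /esq !mulr_sumr -big_split /=; apply: ler_sum => i _.
rewrite !mxE; set x := a ord0 i; set y := c ord0 i.
have := sqr_ge0 (x + 2 * y); nra.
Qed.

Lemma enorm_shift n (c : 'rV[R]_n) (N : R) :
  exists M, forall t, M <= enorm t -> N <= enorm (t + c).
Proof.
exists (Num.sqrt (2 * N ^+ 2 + 2 * esq c)) => t.
rewrite /enorm -/(esq t) -/(esq (t + c)) ler_sqrt ?esq_ge0 // => H.
have H2 := esq_tri t c.
have H3 : N ^+ 2 <= esq (t + c).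
  lra.
apply: le_trans (ler_norm N) _.
by rewrite -sqrtr_sqr ler_sqrt ?esq_ge0.
Qed.

Lemma enorm_scale n k (w : 'rV[R]_n) : enorm (k%:R *: w) = k%:R * enorm w.
Proof.
rewrite /enorm.
have -> : \sum_(i < n) ((k%:R *: w) ord0 i) ^+ 2 = (k%:R) ^+ 2 * \sum_(i < n) (w ord0 i) ^+ 2.
  by rewrite mulr_sumr; apply: eq_bigr => i _; rewrite mxE exprMn.
by rewrite sqrtrM ?sqr_ge0 // sqrtr_sqr ger0_norm.
Qed.

Lemma enorm_gt0 n (w : 'rV[R]_n) i : w ord0 i != 0 -> 0 < enorm w.
Proof.
move=> H; rewrite /enorm sqrtr_gt0 (bigD1 i) //=.
apply: (lt_le_trans (y := w ord0 i ^+ 2)); first by rewrite exprn_even_gt0 //= H.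
by rewrite lerDl sumr_ge0 // => j _; rewrite sqr_ge0.
Qed.

Lemma rowdec n (w : 'rV[R]_n) : w = \sum_(i < n) w ord0 i *: ebase R i.
Proof.
apply/rowP => j; rewrite summxE (bigD1 j) //= big1 ?addr0.
  by rewrite !mxE eqxx mulr1.
by move=> i ij; rewrite !mxE eq_sym (negbTE ij) mulr0.
Qed.

Lemma iterI n (I : set 'rV[R]_n) v : (forall t, I t -> I (v + t)) ->
  forall k t, I t -> I (k%:R *: v + t).
Proof.
move=> Hv; elim=> [|k IH] t It; first by rewrite scale0r add0r.
by rewrite mulrS scalerDl scale1r -addrA; apply: Hv; apply: IH.
Qed.

Lemma fin_max m (P : 'I_m -> R -> Prop) :
  (forall j M M', M <= M' -> P j M -> P j M') -> (forall j, exists M, P j M) ->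
  exists M, 0 < M /\ forall j, P j M.
Proof.
move=> mono /boolp.choice [f Hf].
exists (1 + \sum_(j < m) `|f j|); split.
  by apply: (lt_le_trans ltr01); rewrite lerDl sumr_ge0.
move=> j; apply: (mono j (f j)) => //.
apply: le_trans (ler_norm _) _.
rewrite (bigD1 j) //= addrCA lerDl addr_ge0 // sumr_ge0 //.
Qed.

Lemma nz_entry n (w : 'rV[R]_n) : w != 0 -> exists i, w ord0 i != 0.
Proof.
move=> H; case: (boolp.pselect (exists i, w ord0 i != 0)) => // H'.
exfalso; move/eqP: H; apply; apply/rowP => i; rewrite mxE.
by apply/eqP/negPn/negP => Hi; apply: H'; exists i.
Qed.

Lemma unb_multN n (w : 'rV[R]_n) i : w ord0 i != 0 -> forall M : R,
  exists k, (0 < k)%N /\ M < enorm (k%:R *: w).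
Proof.
move=> H M; have e0 := enorm_gt0 H.
exists (Num.trunc (M / enorm w)).+1; split => //.
rewrite enorm_scale -ltr_pdivrMr //; exact: truncnS_gt.
Qed.

Lemma enorm0 n : enorm (0 : 'rV[R]_n) = 0.
Proof. by rewrite /enorm big1 ?sqrtr0 // => i _; rewrite mxE expr0n. Qed.

Lemma Bk n (I : set 'rV[R]_n) w k : B_set I w -> (0 < k)%N -> B_set I (k%:R *: w).
Proof.
move=> Bw k0 j; have [w0 Hw] := Bw j; split.
  by rewrite mxE mulf_neq0 // pnatr_eq0 -lt0n.
by move=> t It; rewrite mxE -scalerA; apply: iterI.
Qed.

Lemma BI n (I : set 'rV[R]_n) w t : B_set I w -> I t -> I (t + w).
Proof.
move=> Bw It.
suff H : forall (s : seq 'I_n) t, I t -> I (t + \sum_(i <- s) w ord0 i *: ebase R i).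
  by rewrite [w in I (t + w)](rowdec w); apply: H.
elim=> [|a s IH] u Iu; first by rewrite big_nil addr0.
by rewrite big_cons addrCA; apply: (Bw a).2; apply: IH.
Qed.
End H.

Theorem proposition3p7 (R : realType) (X Y : completeNormedModType R[i])
  (n : nat) (I : set 'rV[R]_n.+1) (Bc : set (set X)) :
  I !=set0 ->
  (forall B, Bc B -> B !=set0) ->
  \bigcup_(B in Bc) B = [set: X] ->
  (* (i) *)
  (forall (D : set 'rV[R]_n.+1) (F : 'rV[R]_n.+1 -> X -> Y),
     D `<=` I -> unbounded D -> A_set I !=set0 ->
     slowly_osc I D Bc F ->
     quasi_asym_ap I D (\bigcup_(w in A_set I) multN w) Bc 1 F) /\
  (* (ii) *)
  (forall (Dj : 'I_n.+1 -> set 'rV[R]_n.+1) (F : 'rV[R]_n.+1 -> X -> Y),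
     (forall j, Dj j `<=` I) -> (forall j, unbounded (Dj j)) ->
     (forall w, B_set I w -> unbounded (D_omega Dj w)) ->
     unbounded (\bigcap_(w in B_set I) D_omega Dj w) ->
     B_set I `&` I !=set0 ->
     slowly_osc_j I Dj Bc F ->
     quasi_asym_ap I (\bigcap_(w in B_set I) D_omega Dj w)
       (\bigcup_(w in B_set I `&` I) multN w) Bc 1 F).
Proof.
move=> _ _ _; split.
- move=> D F DI Dunb [w0 Aw0] [Fc Fosc].
  have Ak : forall w k, A_set I w -> (0 < k)%N -> A_set I (k%:R *: w).
    move=> w k [wn Hw] k0; split.
      by rewrite scaler_eq0 negb_or pnatr_eq0 -lt0n k0.
    by move=> t It; apply: iterI.
  split; [done|split; [done|split; [|split; [|split]]]].
  + move=> M; have [i Hi] := nz_entry Aw0.1.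
    have [k [k0 Hk]] := unb_multN Hi M.
    by exists (k%:R *: w0) => //; exists w0 => //; exists k.
  + move=> t tau It [w Aw [k k0 <-]]; rewrite addrC; exact: iterI Aw.2 _ _ It.
  + done.
  + move=> B HB eps eps0; exists 1 => //.
    move=> t0 [w Aw [k k0 <-]].
    exists (k%:R *: w); split; first by exists w => //; exists k.
    split; first by rewrite subrr enorm0.
    have [M HM] := Fosc B HB _ (Ak _ _ Aw k0) eps eps0.
    exists (Num.max M 1); first by rewrite lt_max ltr01 orbT.
    move=> t x [Dt Mt] _ Bx; rewrite scale1r; apply/ltW; apply: HM => //.
    by apply: le_trans Mt; rewrite le_max lexx.
- move=> Dj F DjI Djunb Domunb Dunb [w0 [Bw0 Iw0]] [Fc Fosc].
  split; [|split; [done|split; [|split; [|split]]]].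
  + by move=> t Ht; case: (Ht w0 Bw0) => Dmax _; exact: DjI Dmax.
  + move=> M; have [k [k0 Hk]] := unb_multN (Bw0 ord0).1 M.
    by exists (k%:R *: w0) => //; exists w0 => //; exists k.
  + move=> t tau It [w [Bw _] [k k0 <-]]; apply: BI => //; exact: Bk.
  + done.
  + move=> B HB eps eps0; exists 1 => //.
    move=> t0 [w [Bw Iw] [k k0 <-]].
    set om := k%:R *: w; have Bom : B_set I om by exact: Bk.
    exists om; split; first by exists w => //; exists k.
    split; first by rewrite subrr enorm0.
    set eps' := eps / n.+1%:R.
    have eps'0 : 0 < eps' by rewrite divr_gt0.
    pose c (j : 'I_n.+1) := \sum_(i < n.+1 | (j < i)%N) om ord0 i *: ebase R i.
    have [M [M0 HM]] := @fin_max R n.+1 (fun j M => forall t, M <= enorm t ->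
       Dj j (t + c j) -> forall x, B x ->
       `|F (t + c j + om ord0 j *: ebase R j) x - F (t + c j) x| < (eps'%:C)%C)
       ltac:(by move=> j M M' MM' HP t Mt; apply: HP; apply: le_trans Mt)
       ltac:(move=> j; have [Mj HMj] := Fosc B HB om Bom j eps' eps'0;
             have [M HM] := enorm_shift (c j) Mj;
             by exists M => t Mt Dt x Bx; apply: HMj => //; apply: HM).
    exists M => // t x [Dt Mt] _ Bx.
    have [Dmax Dlt] := Dt om Bom.
    have Dg : forall j : 'I_n.+1, Dj j (t + c j).
      move=> j; case: (ltnP j n) => jn; first exact: Dlt.
      have -> : c j = 0.
        rewrite /c big_pred0 // => i; apply/negbTE; rewrite -leqNgt.
        by apply: leq_trans jn; rewrite -ltnS.
      have -> : j = ord_max.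
        by apply: val_inj; apply/eqP; rewrite /= eqn_leq jn andbT -ltnS ltn_ord.
      by rewrite addr0.
    pose g (m : nat) := t + \sum_(i < n.+1 | (m <= i)%N) om ord0 i *: ebase R i.
    have g0 : g 0%N = t + om.
      by rewrite /g [om in RHS]rowdec; congr (_ + _); apply: eq_bigl.
    have gn : g n.+1 = t.
      by rewrite /g big_pred0 ?addr0 // => i; rewrite leqNgt ltn_ord.
    have gj : forall j : 'I_n.+1, g j = t + c j + om ord0 j *: ebase R j.
      move=> j; rewrite /g /c (bigD1 j) //= addrC -addrA; congr (_ + _).
      congr (_ + _); apply: eq_bigl => i /=.
      by rewrite [RHS]ltn_neqAle andbC eq_sym.
    rewrite scale1r -g0 -gn.
    have -> : F (g 0%N) x - F (g n.+1) x =
        - \sum_(0 <= m < n.+1) (F (g m.+1) x - F (g m) x).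
      by rewrite telescope_sumr // opprB.
    rewrite normrN big_mkord.
    have Hs : \sum_(j < n.+1) (eps'%:C)%C = (eps%:C)%C.
      rewrite sumr_const card_ord -rmorphMn /= /eps' -mulr_natr mulfVK //.
    rewrite -Hs; apply: le_trans (ler_norm_sum _ _ _) _.
    apply: ler_sum => j _; rewrite distrC gj; apply/ltW.
    by apply: HM.
Qed.
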